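(* If $b<0$, then $\ln\rho_t\sim bt$ as $t\to\infty$, where $\rho_t=v_{-t}(\lambda_0)$.
   Context: Let $\sigma\ge 0$, $b\in\mathbb R$, and $\pi$ a $\sigma$-finite measure on $(0,\infty)$ with $\int_0^\infty (z\wedge z^2)\pi(\mathrm{d}z)<\infty$; $\Psi(q)=bq+\frac12\sigma^2q^2+\int_0^\infty(e^{-qu}-1+qu)\pi(\mathrm{d}u)$. For $\lambda\ge 0$, $t\mapsto v_t(\lambda)$ solves $\frac{\partial}{\partial t}v_t(\lambda)=-\Psi(v_t(\lambda))$, $v_0(\lambda)=\lambda$; $v_{-t}$ denotes the inverse of the strictly increasing map $\lambda\mapsto v_t(\lambda)$. Let $\rho=\inf\{z>0:\Psi(z)\ge0\}$ ($\inf\emptyset=\infty$), and fix $\lambda_0\in(0,\rho)$. *)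

(* Defs.v *)
From HB Require Import structures.
From mathcomp Require Import all_boot all_order all_algebra.
From mathcomp Require Import all_classical all_reals all_analysis.
Set Implicit Arguments. Unset Strict Implicit. Unset Printing Implicit Defensive.
Import Order.TTheory GRing.Theory Num.Theory.
Import numFieldNormedType.Exports.
Local Open Scope classical_set_scope.
Local Open Scope ring_scope.

(* Branching mechanism
   Psi(q) = b q + sigma^2 q^2 / 2 + \int_(0,oo) (e^{-qu} - 1 + qu) pi(du),
   the integral being taken as a real (Rintegral); it is finite for q >= 0
   under the integrability hypothesis on pi. *)
Definition Psi (R : realType) (b sigma : R)
  (pi : {measure set R -> \bar R}) (q : R) : R :=
  b * q + (sigma ^+ 2) * (q ^+ 2) / 2
  + Rintegral pi `]0, +oo[ (fun u => expR (- (q * u)) - 1 + q * u).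

(* rho = inf {z > 0 : Psi z >= 0}, as an extended real (inf of empty = +oo) *)
Definition rhoPsi (R : realType) (b sigma : R)
  (pi : {measure set R -> \bar R}) : \bar R :=
  ereal_inf [set (z%:E) | z in [set z : R | 0 < z /\ 0 <= Psi b sigma pi z]].

(* Main.v *)
Require Import Defs.
From HB Require Import structures.
From mathcomp Require Import all_boot all_order all_algebra.
From mathcomp Require Import all_classical all_reals all_analysis.
From mathcomp Require Import ring lra measurable_realfun.
Import Order.TTheory GRing.Theory Num.Theory.
Import numFieldNormedType.Exports.
Local Open Scope classical_set_scope.
Local Open Scope ring_scope.


Definition gg {R : realType} (x : R) : R := expR (- x) - 1 + x.

Lemma gg_ge0 {R : realType} (x : R) : 0 <= gg x.
Proof. rewrite /gg; have := expR_ge1Dx (- x); lra. Qed.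

Lemma gg_le_x {R : realType} (x : R) : 0 <= x -> gg x <= x.
Proof.
move=> x0; rewrite /gg; have : expR (- x) <= 1.
  by rewrite -expR0 ler_expR; lra.
lra.
Qed.

Lemma gg_le_sq {R : realType} (x : R) : 0 <= x -> gg x <= x ^+ 2.
Proof.
move=> x0; rewrite /gg.
have h1 := expR_ge1Dx x.
have h2 := expR_ge1Dx (- x).
have e : expR x * expR (- x) = 1 by rewrite -expRD subrr expR0.
have ep := expR_gt0 (- x).
have h3 : (1 + x) * expR (- x) <= 1.
  nra.
have h4 : 0 <= x * (expR (- x) - (1 - x)) by apply: mulr_ge0 => //; lra.
rewrite expr2; nra.
Qed.

Lemma gg_scale {R : realType} (l x : R) : 0 <= l -> l <= 1 -> gg (l * x) <= l * gg x.
Proof.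
move=> l0 l1; rewrite /gg.
have := convex_expR (Itv01 l0 l1) (- x) 0.
rewrite !convRE /= mulr0 addr0 expR0 mulr1 => h.
have -> : - (l * x) = l * - x by rewrite mulrN.
move: h; rewrite /unstable.onem; lra.
Qed.

Lemma itv_pos {R : realType} (u : R) : (`]0, +oo[%classic : set R) u -> 0 < u.
Proof. by rewrite /= in_itv /= andbT. Qed.

Lemma gg_div {R : realType} (q u : R) : 0 < q -> q <= 1 -> 0 <= u ->
  q^-1 * gg (q * u) <= Num.min u (u ^+ 2).
Proof.
move=> q0 q1 u0.
have qu0 : 0 <= q * u by rewrite mulr_ge0 // ltW.
rewrite le_min; apply/andP; split.
  by rewrite ler_pdivrMl //; apply: (@gg_le_x _ _ qu0).
rewrite ler_pdivrMl //; apply: (le_trans (@gg_le_sq _ _ qu0)).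
rewrite exprMn ler_wpM2r ?exprn_ge0 //.
by rewrite expr2 ger_pMl.
Qed.

Lemma gg_div2 {R : realType} (q u : R) : 0 < q -> 0 <= u ->
  q^-1 * gg (q * u) <= q * u ^+ 2.
Proof.
move=> q0 u0.
have qu0 : 0 <= q * u by rewrite mulr_ge0 // ltW.
rewrite ler_pdivrMl //; apply: (le_trans (@gg_le_sq _ _ qu0)).
by rewrite le_eqVlt; apply/orP; left; apply/eqP; ring.
Qed.


Definition II {R : realType} (pi : {measure set R -> \bar R}) (q : R) : \bar R :=
  (\int[pi]_(u in `]0%R, +oo[) (gg (q * u))%:E)%E.

Lemma mgg {R : realType} (q : R) : measurable_fun (`]0, +oo[ : set R) (fun u : R => ((gg (q * u))%:E)).
Proof.
apply/measurable_EFinP; apply: measurable_funTS.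
rewrite /gg; apply: measurable_funD; last by apply: measurable_funM.
apply: measurable_funB => //; apply: measurableT_comp => //.
by apply: measurable_funN; apply: measurable_funM.
Qed.

Lemma mmin {R : realType} : measurable_fun (`]0, +oo[ : set R) (fun u : R => (Num.min u (u ^+ 2))%:E).
Proof.
apply/measurable_EFinP; apply: measurable_funTS.
apply: measurable_minr => //; exact: measurable_funX.
Qed.

Lemma II_ge0 {R : realType} (pi : {measure set R -> \bar R}) q : (0 <= II pi q)%E.
Proof. by apply: integral_ge0 => u _; rewrite lee_fin gg_ge0. Qed.

Lemma gg_bound {R : realType} (q u : R) : 0 <= q -> 0 <= u ->
  gg (q * u) <= (q + q ^+ 2) * Num.min u (u ^+ 2).
Proof.
move=> q0 u0.
have h1 := @gg_le_x _ _ (mulr_ge0 q0 u0).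
have h2 := @gg_le_sq _ _ (mulr_ge0 q0 u0).
have [u1|u1] := leP u 1.
- have -> : Num.min u (u ^+ 2) = u ^+ 2.
    by apply/min_idPr; rewrite expr2 ler_piMl.
  apply: (le_trans h2); rewrite exprMn mulrDl; rewrite lerDr.
  by apply: mulr_ge0 => //; rewrite exprn_ge0.
- have -> : Num.min u (u ^+ 2) = u.
    by apply/min_idPl; rewrite expr2 ler_peMl // ltW.
  apply: (le_trans h1); rewrite mulrDl lerDl.
  by apply: mulr_ge0 => //; rewrite exprn_ge0.
Qed.

Lemma II_le {R : realType} (pi : {measure set R -> \bar R}) q : 0 <= q ->
  (II pi q <= (q + q ^+ 2)%:E * \int[pi]_(z in `]0%R, +oo[) (Num.min z (z ^+ 2))%R%:E)%E.
Proof.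
move=> q0; rewrite -ge0_integralZl_EFin //; last 3 first.
- by move=> u /itv_pos u0; rewrite lee_fin le_min ltW // exprn_ge0 // ltW.
- exact: mmin.
- by rewrite addr_ge0 // exprn_ge0.
apply: ge0_le_integral => //.
- by move=> u _; rewrite lee_fin gg_ge0.
- exact: mgg.
- apply: emeasurable_funM => //; exact: mmin.
- by move=> u /itv_pos u0; rewrite -EFinM lee_fin gg_bound // ltW.
Qed.

Lemma II_fin {R : realType} (pi : {measure set R -> \bar R}) q : 0 <= q ->
  (\int[pi]_(z in `]0%R, +oo[) (Num.min z (z ^+ 2))%R%:E < +oo)%E ->
  II pi q \is a fin_num.
Proof.
move=> q0 hI; rewrite ge0_fin_numE ?II_ge0 //.
apply: (le_lt_trans (II_le pi q q0)); apply: lte_mul_pinfty => //.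
by rewrite lee_fin addr_ge0 // exprn_ge0.
Qed.

Lemma II_scale {R : realType} (pi : {measure set R -> \bar R}) q1 q2 :
  0 < q1 -> q1 <= q2 -> (II pi q1 <= (q1 / q2)%:E * II pi q2)%E.
Proof.
move=> q10 q12; have q20 : 0 < q2 by apply: lt_le_trans q12.
rewrite /II -ge0_integralZl_EFin //; last 3 first.
- by move=> u _; rewrite lee_fin gg_ge0.
- exact: mgg.
- by rewrite divr_ge0 // ltW.
apply: ge0_le_integral => //.
- by move=> u _; rewrite lee_fin gg_ge0.
- exact: mgg.
- apply: emeasurable_funM => //; exact: mgg.
- move=> u _; rewrite -EFinM lee_fin.
  have -> : q1 * u = (q1 / q2) * (q2 * u).
    by rewrite mulrA divfK // gt_eqF.
  apply: gg_scale; first by rewrite divr_ge0 // ltW.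
  by rewrite ler_pdivrMr // mul1r.
Qed.

Lemma PsiE {R : realType} (b sigma : R) (pi : {measure set R -> \bar R}) q :
  Psi b sigma pi q = b * q + sigma ^+ 2 * q ^+ 2 / 2 + fine (II pi q).
Proof. by []. Qed.


Lemma psi_mono {R : realType} (b sigma : R) (pi : {measure set R -> \bar R}) q1 q2 :
  (\int[pi]_(z in `]0%R, +oo[) (Num.min z (z ^+ 2))%R%:E < +oo)%E ->
  0 < q1 -> q1 <= q2 -> Psi b sigma pi q1 / q1 <= Psi b sigma pi q2 / q2.
Proof.
move=> hI q10 q12; have q20 : 0 < q2 by apply: lt_le_trans q12.
have f1 := II_fin pi q1 (ltW q10) hI; have f2 := II_fin pi q2 (ltW q20) hI.
have h : fine (II pi q1) <= q1 / q2 * fine (II pi q2).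
  have -> : q1 / q2 * fine (II pi q2) = fine ((q1 / q2)%:E * II pi q2).
    by rewrite fineM.
  apply: fine_le => //; first by rewrite fin_numM.
  exact: II_scale.
rewrite !PsiE.
set F1 := fine (II pi q1) in h *; set F2 := fine (II pi q2) in h *.
have e1 : (b * q1 + sigma ^+ 2 * q1 ^+ 2 / 2 + F1) / q1 = b + sigma ^+ 2 * q1 / 2 + F1 / q1.
  by field; rewrite gt_eqF.
have e2 : (b * q2 + sigma ^+ 2 * q2 ^+ 2 / 2 + F2) / q2 = b + sigma ^+ 2 * q2 / 2 + F2 / q2.
  by field; rewrite gt_eqF.
rewrite e1 e2.
have h3 : F1 / q1 <= F2 / q2.
  rewrite ler_pdivrMr // mulrAC; apply: (le_trans h).
  by rewrite [X in X <= _]mulrC mulrA.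
have h4 : sigma ^+ 2 * q1 / 2 <= sigma ^+ 2 * q2 / 2.
  have : 0 <= sigma ^+ 2 * (q2 - q1) by apply: mulr_ge0; [exact: sqr_ge0 | lra].
  lra.
lra.
Qed.

Lemma II_small {R : realType} (pi : {measure set R -> \bar R}) :
  (\int[pi]_(z in `]0%R, +oo[) (Num.min z (z ^+ 2))%R%:E < +oo)%E ->
  forall e r : R, 0 < e -> 0 < r ->
  exists q, [/\ 0 < q, q <= r & fine (II pi q) / q <= e].
Proof.
move=> hI e r e0 r0.
pose q (n : nat) : R := harmonic n.
have q0 n : 0 < q n by apply: harmonic_gt0.
have q1 n : q n <= 1 by rewrite /q /harmonic /= invf_le1 // ler1n.
pose f_ (n : nat) (u : R) := ((q n)^-1 * gg (q n * u))%:E.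
have mD : measurable (`]0%R, +oo[%classic : set R) by apply: measurable_itv.
have mf_ n : measurable_fun (`]0%R, +oo[%classic : set R) (f_ n).
  apply/measurable_EFinP; apply: measurable_funM => //.
  by have /measurable_EFinP := mgg (q n).
have mf : measurable_fun (`]0%R, +oo[%classic : set R) (cst (0 : \bar R)) by [].
have ig : pi.-integrable (`]0%R, +oo[%classic : set R) (fun u => (Num.min u (u ^+ 2))%:E).
  apply/integrableP; split; first exact: mmin.
  rewrite (eq_integral (fun u : R => (Num.min u (u ^+ 2))%:E)) //.
  move=> u /[!inE] /itv_pos u0; rewrite gee0_abs // lee_fin le_min ltW //.
  by rewrite exprn_ge0 // ltW.
have f_f : \forall x \ae pi, (`]0%R, +oo[%classic : set R) x -> f_ ^~ x @ \oo --> cst (0 : \bar R) x.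
  apply: aeW => u /itv_pos u0; apply/fine_cvgP; split; first exact: nearW.
  rewrite /f_ /comp /=.
  apply: (@squeeze_cvgr _ _ _ _ (cst 0) (fun n => q n * u ^+ 2)).
  - apply: nearW => n /=; rewrite mulr_ge0 ?gg_ge0 ?invr_ge0 ?(ltW (q0 n)) //=.
    exact: (gg_div2 (q n) u (q0 n) (ltW u0)).
  - exact: cvg_cst.
  - have := cvgM cvg_harmonic (cvg_cst (u ^+ 2)); rewrite mul0r; exact.
have f_g : \forall x \ae pi, forall n, (`]0%R, +oo[%classic : set R) x -> (`|f_ n x| <= (Num.min x (x ^+ 2))%:E)%E.
  apply: aeW => u n /itv_pos u0; rewrite /f_ abse_EFin lee_fin ger0_norm.
    exact: (gg_div (q n) u (q0 n) (q1 n) (ltW u0)).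
  by rewrite mulr_ge0 ?gg_ge0 ?invr_ge0 ?ltW.
have [_ _ hc] := dominated_convergence mD mf_ mf f_f ig f_g.
rewrite integral0 in hc.
move/fine_cvgP: hc => [hfin hc].
have ef n : (\int[pi]_(x in `]0%R, +oo[) f_ n x)%E = ((q n)^-1%:E * II pi (q n))%E.
  rewrite /II -ge0_integralZl_EFin //.
  - by move=> u _; rewrite lee_fin gg_ge0.
  - exact: mgg.
  - by rewrite invr_ge0 ltW.
move/cvgrPdist_le : hc => /(_ e e0) hc.
move/cvgrPdist_le : (@cvg_harmonic R) => /(_ r r0) hh.
have [N _ HN] := filterI hc hh.
have [h1 h2] := HN N (leqnn N).
exists (q N); split => //.
- by move: h2; rewrite sub0r normrN ger0_norm // ltW.
- move: h1; rewrite /= ef fineM //; last exact: II_fin (ltW (q0 N)) hI.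
  by rewrite sub0r normrN mulrC => /(le_trans (ler_norm _)).
Qed.


Lemma cont_of_derive {R : realType} {f : R -> R} {x d : R} :
  is_derive x 1 f d -> {for x, continuous f}.
Proof.
move=> h; apply: differentiable_continuous; apply/derivable1_diffP.
by case: h.
Qed.

Lemma ndecr_lemma {R : realType} (f df : R -> R) (a c : R) : a <= c ->
  (forall x, a < x -> x < c -> is_derive x 1 f (df x)) ->
  (forall x, a < x -> x < c -> 0 <= df x) ->
  {within `[a, c], continuous f} -> f a <= f c.
Proof.
move=> ac hd hp hc.
apply: (@ger0_derive1_ndecr _ f a c) => //.
- move=> x /[!in_itv] /andP[ax xc]; have := hd x ax xc; by case.
- move=> x /[!in_itv] /andP[ax xc]; rewrite derive1E.
  have := hd x ax xc => h; rewrite derive_val; exact: hp.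
Qed.

Lemma within_cont {R : realType} (f : R -> R) (a c : R) : a < c ->
  (forall x, a < x -> x <= c -> {for x, continuous f}) ->
  f x @[x --> a^'+] --> f a -> {within `[a, c], continuous f}.
Proof.
move=> ac hc ha; apply/continuous_within_itvP => //; split => //.
- by move=> x /[!in_itv] /andP[ax xc]; apply: hc => //; apply: ltW.
- by apply: cvg_at_left_filter; apply: hc => //.
Qed.

Lemma is_derive_expRlin {R : realType} (k x : R) :
  is_derive x 1 (fun s => expR (- (k * s))) (expR (- (k * x)) * (- k)).
Proof.
have h1 : is_derive x 1 (fun s : R => - (k * s)) (- k).
  have h := is_deriveN (is_deriveZ k (is_derive_id x (1 : R))).
  by move: h; rewrite /= ?scaler1 ?mulr1.
have := @is_derive1_comp _ expR (fun s : R => - (k * s)) x _ _ (is_derive_expR _) h1.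
by [].
Qed.

Lemma cmp_gen {R : realType} (u P : R -> R) (a c k : R) :
  0 <= a -> a <= c ->
  (forall s : R, 0 <= s -> u x @[x --> s^'+] --> u s) ->
  (forall s : R, 0 < s -> is_derive s 1 u (- P (u s))) ->
  (forall s, a < s -> s < c -> k * u s <= - P (u s)) ->
  u a * expR (- (k * a)) <= u c * expR (- (k * c)).
Proof.
move=> a0 ac Hr Hd Hs.
have [<-|ac'] := eqVneq a c; first by [].
have lt : a < c by rewrite lt_neqAle ac' ac.
pose f s := u s * expR (- (k * s)).
have df (s : R) : 0 < s -> is_derive s 1 f (expR (- (k * s)) * (- P (u s) - k * u s)).
  move=> s0; apply: is_derive_eq (is_deriveM (Hd s s0) (is_derive_expRlin k s)) _.
  rewrite /GRing.scale /=; ring.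
apply: (@ndecr_lemma _ f (fun s => expR (- (k * s)) * (- P (u s) - k * u s)) a c ac).
- move=> x ax xc; apply: df; exact: le_lt_trans ax.
- move=> x ax xc; apply: mulr_ge0; [exact: expR_ge0 | rewrite subr_ge0; exact: Hs].
- apply: within_cont => //.
  + move=> x ax _; exact: cont_of_derive (df x (le_lt_trans a0 ax)).
  + apply: cvgM; first exact: Hr.
    apply: cvg_at_right_filter; have h := cont_of_derive (is_derive_expRlin k a); exact: h.
Qed.

Lemma cmp_gen2 {R : realType} (u P : R -> R) (a c k : R) :
  0 <= a -> a <= c ->
  (forall s : R, 0 <= s -> u x @[x --> s^'+] --> u s) ->
  (forall s : R, 0 < s -> is_derive s 1 u (- P (u s))) ->
  (forall s, a < s -> s < c -> - P (u s) <= k * u s) ->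
  u c * expR (- (k * c)) <= u a * expR (- (k * a)).
Proof.
move=> a0 ac Hr Hd Hs.
have := @cmp_gen _ (fun s => - u s) (fun y => - P (- y)) a c k a0 ac.
rewrite !mulNr lerN2; apply.
- move=> s s0; apply: cvgN; exact: Hr.
- move=> s s0; apply: is_derive_eq (is_deriveN (Hd s s0)) _.
  by rewrite !opprK.
- move=> s sa sc; rewrite !opprK; have := Hs s sa sc; lra.
Qed.


Lemma deriv_pos_left {R : realType} (u : R -> R) (x D : R) :
  is_derive x 1 u D -> 0 < D -> forall e : R, 0 < e ->
  exists h : R, [/\ - e < h, h < 0 & u (h + x) < u x].
Proof.
move=> hd D0 e e0.
have hc : (fun h : R => h^-1 *: ((u \o shift x) (h *: 1) - u x)) @ 0^' --> D.
  case: hd => ex dv; rewrite -dv; exact: ex.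
move: hc => /cvgr_gt /(_ 0 D0); rewrite near_withinE.
move=> /nbhs_ballP [r r0 Hr].
have m0 : 0 < Num.min e r by rewrite lt_min e0 r0.
have me : Num.min e r <= e by rewrite ge_min lexx.
have mr : Num.min e r <= r by rewrite ge_min lexx orbT.
pose h := - (Num.min e r / 2).
have hneg : h < 0 by rewrite /h; lra.
have hb : ball 0 r h by rewrite /ball /= sub0r normrN ltr0_norm //; rewrite /h; lra.
have := Hr h hb (ltr0_neq0 hneg).
rewrite /GRing.scale /= nmulr_rgt0 ?invr_lt0 // subr_lt0 mulr1 => H.
by exists h; split => //; rewrite /h; lra.
Qed.

Lemma traj_lower {R : realType} {u P : R -> R} {b t lam : R} :
  (forall s : R, 0 <= s -> u x @[x --> s^'+] --> u s) ->
  (forall s : R, 0 < s -> is_derive s 1 u (- P (u s))) ->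
  (forall q, b * q <= P q) -> u t = lam ->
  forall s, 0 <= s -> s <= t -> lam * expR (b * t) <= u s * expR (b * s).
Proof.
move=> Hr Hd Pl ut s s0 st.
have := @cmp_gen2 _ u P s t (- b) s0 st Hr Hd.
rewrite !mulNr !opprK ut; apply => x _ _.
have := Pl (u x); lra.
Qed.

Lemma traj_pos {R : realType} {u P : R -> R} {b t lam : R} :
  (forall s : R, 0 <= s -> u x @[x --> s^'+] --> u s) ->
  (forall s : R, 0 < s -> is_derive s 1 u (- P (u s))) ->
  (forall q, b * q <= P q) -> u t = lam -> 0 < lam ->
  forall s, 0 <= s -> s <= t -> 0 < u s.
Proof.
move=> Hr Hd Pl ut l0 s s0 st.
have := traj_lower Hr Hd Pl ut s s0 st.
have := expR_gt0 (b * t); have := expR_gt0 (b * s) => e1 e2 h.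
have : 0 < u s * expR (b * s) by apply: lt_le_trans h; apply: mulr_gt0.
by rewrite pmulr_lgt0.
Qed.

Lemma traj_le {R : realType} {u P : R -> R} {b t lam : R} :
  (forall s : R, 0 <= s -> u x @[x --> s^'+] --> u s) ->
  (forall s : R, 0 < s -> is_derive s 1 u (- P (u s))) ->
  (forall q, b * q <= P q) -> u t = lam -> 0 < lam ->
  (forall q, 0 < q -> q <= lam -> P q < 0) ->
  forall s, 0 <= s -> s <= t -> u s <= lam.
Proof.
move=> Hr Hd Pl ut l0 Pn s1 s10 s1t.
rewrite leNgt; apply/negP => hs1.
pose A := [set s | s1 <= s /\ s <= t /\ u s <= lam].
have At : A t by split => //; split => //; rewrite ut.
have lbA : lbound A s1 by move=> s [].
have neA : nonempty A by exists t.
have hlA : has_lbound A by exists s1.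
set s2 := inf A.
have s12 : s1 <= s2 by apply: lb_le_inf.
have s2t : s2 <= t by apply: ge_inf.
have gt s : s1 <= s -> s < s2 -> lam < u s.
  move=> h1 h2; rewrite ltNge; apply/negP => h3.
  have : s2 <= s by apply: ge_inf => //; split => //; split => //; apply: ltW (lt_le_trans h2 s2t).
  by rewrite leNgt h2.
have s20 : 0 <= s2 by apply: le_trans s12.
have us2 : u s2 <= lam.
  rewrite leNgt; apply/negP => H.
  move: (Hr s2 s20) => /cvgr_gt /(_ lam H); rewrite near_withinE.
  move=> /nbhs_ballP [r r0 Hb].
  have [a Aa ar] := @inf_adherent _ A r r0 (conj neA hlA).
  have s2a : s2 <= a by apply: ge_inf.
  case: Aa => _ [_ ua].
  have [e|ne] := eqVneq s2 a; first by move: H; rewrite e ltNge ua.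
  have s2a' : s2 < a by rewrite lt_neqAle ne s2a.
  have : lam < u a.
    apply: Hb => //; rewrite /ball /= ltr0_norm ?subr_lt0 //; rewrite -/s2 in ar; lra.
  by rewrite ltNge ua.
have s12' : s1 < s2.
  rewrite lt_neqAle s12 andbT; apply/negP => /eqP e.
  by move: hs1; rewrite e ltNge us2.
have s2pos : 0 < s2 by apply: le_lt_trans s12'.
have ups2 : 0 < u s2 by apply: (traj_pos Hr Hd Pl ut l0) => //.
have D0 : 0 < - P (u s2) by rewrite oppr_gt0; apply: Pn.
have s21 : 0 < s2 - s1 by rewrite subr_gt0.
have [h [h1 h2 h3]] := deriv_pos_left _ _ _ (Hd s2 s2pos) D0 _ s21.
have := gt (h + s2).
have -> : s1 <= h + s2 by lra.
have -> : h + s2 < s2 by lra.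
move=> /(_ isT isT); lra.
Qed.

Lemma ln_le_mulexp {R : realType} {x y z : R} : 0 < x -> 0 < y ->
  x <= y * expR z -> ln x <= ln y + z.
Proof.
move=> x0 y0 h.
have yz : 0 < y * expR z by rewrite mulr_gt0 // expR_gt0.
rewrite -[z]expRK -lnM ?posrE ?expR_gt0 //.
by rewrite ler_ln ?posrE.
Qed.

Lemma ln_ge_mulexp {R : realType} {x y z : R} : 0 < x -> 0 < y ->
  y * expR z <= x -> ln y + z <= ln x.
Proof.
move=> x0 y0 h.
have yz : 0 < y * expR z by rewrite mulr_gt0 // expR_gt0.
rewrite -[z]expRK -lnM ?posrE ?expR_gt0 //.
by rewrite ler_ln ?posrE.
Qed.

Lemma traj_mono {R : realType} {u P : R -> R} {b t lam : R} :
  (forall s : R, 0 <= s -> u x @[x --> s^'+] --> u s) ->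
  (forall s : R, 0 < s -> is_derive s 1 u (- P (u s))) ->
  (forall q, b * q <= P q) -> u t = lam -> 0 < lam ->
  (forall q, 0 < q -> q <= lam -> P q < 0) ->
  forall a c, 0 <= a -> a <= c -> c <= t -> u a <= u c.
Proof.
move=> Hr Hd Pl ut l0 Pn a c a0 ac ct.
have := @cmp_gen _ u P a c 0 a0 ac Hr Hd.
rewrite !mul0r oppr0 expR0 !mulr1; apply => s sa sc.
have s0 : 0 <= s by apply: le_trans (ltW sa).
have st : s <= t by apply: le_trans (ltW sc) ct.
rewrite mul0r oppr_ge0 ltW //; apply: (Pn).
  exact: (traj_pos Hr Hd Pl ut l0).
exact: (traj_le Hr Hd Pl ut l0 Pn).
Qed.

Lemma traj_upper {R : realType} {u P : R -> R} {b t lam : R} (d A c0 : R) :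
  (forall s : R, 0 <= s -> u x @[x --> s^'+] --> u s) ->
  (forall s : R, 0 < s -> is_derive s 1 u (- P (u s))) ->
  (forall q, b * q <= P q) -> u t = lam -> 0 < lam ->
  (forall q, 0 < q -> q <= lam -> P q < 0) ->
  0 < d -> d <= lam -> 0 < A -> 0 < c0 ->
  (forall q, 0 < q -> q <= d -> P q <= - A * q) ->
  (forall q, 0 < q -> q <= lam -> P q <= - c0 * q) ->
  0 < t -> ln lam - ln d < c0 * t ->
  ln (u 0) <= ln d - A * t + A * (ln lam - ln d) / c0.
Proof.
move=> Hr Hd Pl ut l0 Pn d0 dl A0 c00 Hsm Hc t0 tbig.
have pos s : 0 <= s -> s <= t -> 0 < u s by apply: (traj_pos Hr Hd Pl ut l0).
have le s : 0 <= s -> s <= t -> u s <= lam by apply: (traj_le Hr Hd Pl ut l0 Pn).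
have mono := traj_mono Hr Hd Pl ut l0 Pn.
have u00 := pos 0 (lexx 0) (ltW t0).
have g : u 0 * expR (- (c0 * 0)) <= u t * expR (- (c0 * t)).
  apply: (@cmp_gen _ u P 0 t c0 (lexx 0) (ltW t0) Hr Hd) => s s0 st.
  have := Hc (u s) (pos s (ltW s0) (ltW st)) (le s (ltW s0) (ltW st)); lra.
rewrite mulr0 oppr0 expR0 mulr1 ut in g.
have lnl := ln_le_mulexp u00 l0 g.
have ud : u 0 < d.
  rewrite -(@ltr_ln R) ?posrE //; lra.
have cu : {within `[0, t], continuous u}.
  apply: within_cont => //; last exact: Hr.
  by move=> x x0 _; apply: cont_of_derive (Hd x x0).
have [s1 s1i us1] : exists2 s1, s1 \in `[0, t] & u s1 = d.
  apply: IVT => //; first exact: ltW.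
  rewrite ut ge_min le_max; apply/andP; split; apply/orP.
  - by left; apply: ltW.
  - by right.
move: s1i; rewrite in_itv /= => /andP[s10 s1t].
have p1 : u 0 * expR (- (A * 0)) <= u s1 * expR (- (A * s1)).
  apply: (@cmp_gen _ u P 0 s1 A (lexx 0) s10 Hr Hd) => s s0 st.
  have s0' := ltW s0; have st' : s <= t by apply: le_trans (ltW st) s1t.
  have us : u s <= d by rewrite -us1; apply: mono => //; apply: ltW.
  have := Hsm (u s) (pos s s0' st') us; lra.
rewrite mulr0 oppr0 expR0 mulr1 us1 in p1.
have lp1 := ln_le_mulexp u00 d0 p1.
have p2 : u s1 * expR (- (c0 * s1)) <= u t * expR (- (c0 * t)).
  apply: (@cmp_gen _ u P s1 t c0 s10 s1t Hr Hd) => s s0 st.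
  have s0' : 0 <= s by apply: le_trans (ltW s0).
  have := Hc (u s) (pos s s0' (ltW st)) (le s s0' (ltW st)); lra.
rewrite us1 ut in p2.
have lp2 : ln d + - (c0 * s1) <= ln lam + - (c0 * t).
  have := ln_ge_mulexp (mulr_gt0 l0 (expR_gt0 (- (c0 * t)))) d0 p2.
  by rewrite lnM ?posrE ?expR_gt0 // expRK.
have ts1 : t - s1 <= (ln lam - ln d) / c0.
  by rewrite ler_pdivlMr //; lra.
have : A * (t - s1) <= A * ((ln lam - ln d) / c0) by rewrite ler_pM2l.
rewrite mulrA; lra.
Qed.


Lemma near_lin {R : realType} (al be : R) : 0 < al ->
  \forall t \near +oo, be <= al * t.
Proof.
move=> a0; apply: filterS (nbhs_pinfty_gt (num_real (al^-1 * be))) => t ht.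
by rewrite -ler_pdivrMl // ltW.
Qed.

Lemma final_arith {R : realType} (L b t A C lam0 e eps : R) :
  b < 0 -> 0 < t -> 0 < e -> eps = e * (- b) / 2 -> A = - b - eps ->
  lam0 + b * t <= L -> L <= C - A * t ->
  - (e * (- b)) * t <= lam0 -> C <= e * (- b) / 2 * t ->
  `|1 - L / (b * t)| <= e.
Proof.
move=> b0 t0 e0 epsE AE h1 h2 h3 h4.
have bt : b * t < 0 by rewrite nmulr_rlt0.
set r := L / (b * t).
have hL : L = r * (b * t) by rewrite /r divfK // ltr0_neq0.
rewrite hL in h1 h2; subst eps A.
set x := - (b * t).
have x0 : 0 < x by rewrite /x oppr_gt0.
have w1 : lam0 <= (1 - r) * x by rewrite /x; lra.
have w2 : (1 - r) * x <= C + e * (- b) / 2 * t by rewrite /x; lra.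
have ex : e * x = e * (- b) * t by rewrite /x; ring.
rewrite ler_norml; apply/andP; split.
- rewrite -(ler_pM2r x0) mulNr; lra.
- rewrite -(ler_pM2r x0); lra.
Qed.


Theorem lemma3 (R : realType) (sigma b : R) (pi : {measure set R -> \bar R})
  (v : R -> R -> R) (lambda0 : R) (rho : R -> R) :
  0 <= sigma ->
  sigma_finite (`]0, +oo[ : set R) pi ->
  (\int[pi]_(z in `]0%R, +oo[) (Num.min z (z ^+ 2))%R%:E < +oo)%E ->
  (forall l : R, 0 <= l ->
     v 0 l = l /\
     (fun s => v s l) x @[x --> 0^'+] --> l /\
     (forall t : R, 0 < t ->
        is_derive t 1 (fun s => v s l) (- Psi b sigma pi (v t l)))) ->
  0 < lambda0 -> (lambda0%:E < rhoPsi b sigma pi)%E ->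
  (forall t : R, 0 <= t -> 0 <= rho t /\ v t (rho t) = lambda0) ->
  b < 0 ->
  (fun t => ln (rho t) / (b * t)) x @[x --> +oo] --> (1 : R).
Proof.
move=> s0 _ hI Hv l0 lrho Hrho b0.
set P := Psi b sigma pi.
have Pl q : b * q <= P q.
  rewrite /P PsiE.
  have h1 : 0 <= fine (II pi q) by apply: fine_ge0; apply: II_ge0.
  have h2 : 0 <= sigma ^+ 2 * q ^+ 2 / 2.
    apply: divr_ge0; last by []. apply: mulr_ge0; exact: sqr_ge0.
  lra.
have Pn q : 0 < q -> q <= lambda0 -> P q < 0.
  move=> q0 ql; rewrite ltNge; apply/negP => h.
  have : (rhoPsi b sigma pi <= q%:E)%E.
    by apply: ereal_inf_lbound; exists q.
  move=> h'; have := lt_le_trans lrho h'; rewrite lte_fin; lra.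
pose c0 := - P lambda0 / lambda0.
have c00 : 0 < c0 by rewrite /c0 divr_gt0 // oppr_gt0; apply: Pn.
have Hc q : 0 < q -> q <= lambda0 -> P q <= - c0 * q.
  move=> q0 ql; have := psi_mono b sigma pi q lambda0 hI q0 ql.
  rewrite -/P ler_pdivrMr // /c0 => h; rewrite mulNr; lra.
apply/cvgrPdist_le => e e0.
pose e' := Num.min e 1.
have e'0 : 0 < e' by rewrite lt_min e0 ltr01.
have e'1 : e' <= 1 by rewrite ge_min lexx orbT.
have e'e : e' <= e by rewrite ge_min lexx.
pose B := - b.
have B0 : 0 < B by rewrite /B oppr_gt0.
pose eps := e' * B / 2.
have eps0 : 0 < eps by rewrite /eps divr_gt0 // mulr_gt0.
have epsB : eps < B.
  have : e' * B <= B by rewrite ler_piMl // ltW.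
  rewrite /eps; lra.
pose A := B - eps.
have A0 : 0 < A by rewrite /A subr_gt0.
have s21 : 0 < sigma ^+ 2 + 1 by apply: ltr_wpDl; [exact: sqr_ge0 | exact: ltr01].
have r0 : 0 < Num.min lambda0 (eps / (sigma ^+ 2 + 1)).
  by rewrite lt_min l0 divr_gt0.
have [q0 [q00 q0r hq0]] := II_small pi hI (eps / 2) (Num.min lambda0 (eps / (sigma ^+ 2 + 1)))
  (divr_gt0 eps0 (ltr0Sn _ 1)) r0.
have q0l : q0 <= lambda0 by apply: (le_trans q0r); rewrite ge_min lexx.
have q0e : q0 * (sigma ^+ 2 + 1) <= eps.
  by rewrite -ler_pdivlMr //; apply: (le_trans q0r); rewrite ge_min lexx orbT.
have Hsm q : 0 < q -> q <= q0 -> P q <= - A * q.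
  move=> q1 qq0; have := psi_mono b sigma pi q q0 hI q1 qq0.
  rewrite -/P {2}/P PsiE.
  set F := fine (II pi q0) in hq0 *.
  have -> : (b * q0 + sigma ^+ 2 * q0 ^+ 2 / 2 + F) / q0 = b + sigma ^+ 2 * q0 / 2 + F / q0.
    by field; rewrite gt_eqF.
  have hs : sigma ^+ 2 * q0 <= eps.
    apply: (le_trans _ q0e); rewrite mulrDr mulr1 mulrC lerDl; exact: ltW.
  rewrite ler_pdivrMr // => h.
  apply: (le_trans h); rewrite /A /B; apply: ler_wpM2r; first exact: ltW.
  lra.
pose K := ln lambda0 - ln q0.
pose C := ln q0 + A * K / c0.
near=> t.
have t0 : 0 < t by near: t; apply: nbhs_pinfty_gt; exact: num_real.
have tb : K < c0 * t.
  have : K + 1 <= c0 * t by near: t; apply: near_lin.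
  lra.
have h3 : - (e' * B) * t <= ln lambda0.
  have : - ln lambda0 <= e' * B * t by near: t; apply: near_lin; rewrite mulr_gt0.
  rewrite mulNr; lra.
have h4 : C <= e' * B / 2 * t.
  by near: t; apply: near_lin; rewrite divr_gt0 // mulr_gt0.
have [rt0 vt] := Hrho t (ltW t0).
have [v0 [vr vd]] := Hv (rho t) rt0.
pose u := fun s => v s (rho t).
have Hr : forall s : R, 0 <= s -> u x @[x --> s^'+] --> u s.
  move=> s; rewrite le_eqVlt => /predU1P [<-|s0']; first by rewrite /u v0.
  apply: cvg_at_right_filter; exact: cont_of_derive (vd s s0').
have Hd : forall s : R, 0 < s -> is_derive s 1 u (- P (u s)) by exact: vd.
have ut : u t = lambda0 by exact: vt.
have low := traj_lower Hr Hd Pl ut 0 (lexx 0) (ltW t0).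
rewrite mulr0 expR0 mulr1 in low.
have upos : 0 < u 0 := traj_pos Hr Hd Pl ut l0 0 (lexx 0) (ltW t0).
have lnlow := ln_ge_mulexp upos l0 low.
have up := traj_upper q0 A c0 Hr Hd Pl ut l0 Pn q00 q0l A0 c00 Hsm Hc t0 tb.
have u0 : u 0 = rho t by exact: v0.
rewrite u0 in lnlow up.
apply: (le_trans _ e'e).
apply: (@final_arith _ (ln (rho t)) b t A C (ln lambda0) e' eps) => //.
by rewrite /C /K; lra.
Unshelve. all: end_near.
Qed.
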